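(* Let $r\ge 1$ and let $x_0,y_0$ be positive integers. Let $p_r(x_0,y_0;x,y)$ denote the probability that the CA competition process with fitness ratio $r$ started at $(x_0,y_0)$ is at state $(x,y)$ at time $x+y-x_0-y_0$. Then for all integers $k\ge0$, $h\ge0$, \[ p_r(x_0,y_0;x_0+k,y_0+h)\ \ge\ \frac{(x_0)_k\,(y_0)_h}{(rx_0+y_0)_{k+h}}\binom{k+h}{k}. \]
   Context: The CA competition process with fitness ratio $r\ge 1$ started at $(x_0,y_0)$ is the discrete-time Markov chain $\{(X_t,Y_t)\}_{t\ge0}$ on $\{(x,y)\in\mathbb{Z}^2: x\ge1,y\ge1\}$ with $(X_0,Y_0)=(x_0,y_0)$ and transition probabilities: from $(x,y)$ it moves to $(x+1,y)$ with probability $\frac{rx}{rx+y}$ and to $(x,y+1)$ with probability $\frac{y}{rx+y}$. $(x)_k=\prod_{i=0}^{k-1}(x+i)$ denotes the Pochhammer symbol (with $(x)_0=1$). *)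

(* Defs.v *)
From HB Require Import structures.
From mathcomp Require Import all_boot all_order all_algebra.
Set Implicit Arguments. Unset Strict Implicit. Unset Printing Implicit Defensive.
Import Order.TTheory GRing.Theory Num.Theory.
Local Open Scope ring_scope.

Definition ca_step (s : nat * nat) (b : bool) : nat * nat :=
  if b then (s.1.+1, s.2) else (s.1, s.2.+1).

Definition ca_trans (R : realFieldType) (r : R) (s : nat * nat) (b : bool) : R :=
  let x := (s.1)%:R in let y := (s.2)%:R in
  if b then r * x / (r * x + y) else y / (r * x + y).

Fixpoint ca_path_prob (R : realFieldType) (r : R) (s : nat * nat) (bs : seq bool) : R :=
  match bs with
  | [::] => 1
  | b :: bs' => ca_trans r s b * ca_path_prob r (ca_step s b) bs'
  end.

Definition ca_dist (R : realFieldType) (r : R) (x0 y0 t : nat) (s : nat * nat) : R :=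
  \sum_(bs : t.-tuple bool | foldl ca_step (x0, y0) bs == s)
     ca_path_prob r (x0, y0) bs.

Definition p_r (R : realFieldType) (r : R) (x0 y0 x y : nat) : R :=
  ca_dist r x0 y0 (x + y - (x0 + y0))%N (x, y).

Definition poch (R : realFieldType) (a : R) (k : nat) : R :=
  \prod_(i < k) (a + i%:R).

(* Main.v *)
Require Import Defs.
From HB Require Import structures.
From mathcomp Require Import all_boot all_order all_algebra.
From mathcomp Require Import zify ring lra.
Import Order.TTheory GRing.Theory Num.Theory.
Local Open Scope ring_scope.
Set Implicit Arguments. Unset Strict Implicit.

Lemma path_prob_rcons (R : realFieldType) (r : R) s bs b :
  ca_path_prob r s (rcons bs b) = ca_path_prob r s bs * ca_trans r (foldl ca_step s bs) b.
Proof.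
elim: bs s => [|c bs IH] s /=; first by rewrite mul1r mulr1.
by rewrite IH mulrA.
Qed.

Lemma foldl_inv s bs : let w := foldl ca_step s bs in
  (s.1 <= w.1 /\ s.2 <= w.2)%N.
Proof.
elim: bs s => [|c bs IH] s /=; first by [].
have [h1 h2] := IH (ca_step s c).
by case: c h1 h2 => /= h1 h2; split; lia.
Qed.

Lemma sum_tuple_rcons (R : realFieldType) t (F : seq bool -> R) :
  \sum_(u : t.+1.-tuple bool) F u = \sum_(bs : t.-tuple bool) \sum_(b : bool) F (rcons bs b).
Proof.
rewrite pair_big /=.
pose h := fun p : t.-tuple bool * bool => [tuple of rcons p.1 p.2].
pose g := fun u : t.+1.-tuple bool =>
  (belast_tuple (thead u) (behead_tuple u), last (thead u) (behead u)).
rewrite (reindex h) //=.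
exists g.
- move=> [bs b] _; rewrite /g /h /=.
  have e : rcons bs b = thead [tuple of rcons bs b] :: behead [tuple of rcons bs b].
    by rewrite -[LHS]/(tval [tuple of rcons bs b]) {1}(tuple_eta [tuple of rcons bs b]).
  move: e; rewrite lastI => /eqP; rewrite eqseq_rcons => /andP[/eqP e1 /eqP e2].
  by congr (_, _); [apply: val_inj => /=; exact: esym e1 | exact: esym e2].
- move=> u _; apply: val_inj; rewrite /g /h /=.
  rewrite -lastI; exact: (congr1 val (esym (tuple_eta u))).
Qed.

Lemma dist_S (R : realFieldType) (r : R) x0 y0 t u :
  ca_dist r x0 y0 t.+1 u = \sum_(b : bool) \sum_(bs : t.-tuple bool |
     ca_step (foldl ca_step (x0, y0) bs) b == u)
     ca_path_prob r (x0, y0) bs * ca_trans r (foldl ca_step (x0, y0) bs) b.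
Proof.
rewrite /ca_dist big_mkcond /=.
rewrite (@sum_tuple_rcons _ t (fun s => if foldl ca_step (x0, y0) s == u
   then ca_path_prob r (x0, y0) s else 0)) exchange_big /=.
apply: eq_bigr => b _; rewrite [RHS]big_mkcond; apply: eq_bigr => bs _.
by rewrite foldl_rcons path_prob_rcons.
Qed.

Lemma dist_pick (R : realFieldType) (r : R) x0 y0 t u v b :
  (forall w, (ca_step w b == u) = (w == v)) ->
  \sum_(bs : t.-tuple bool | ca_step (foldl ca_step (x0, y0) bs) b == u)
     ca_path_prob r (x0, y0) bs * ca_trans r (foldl ca_step (x0, y0) bs) b
  = ca_dist r x0 y0 t v * ca_trans r v b.
Proof.
move=> H; rewrite /ca_dist big_distrl /=.
apply: eq_big => bs; first by rewrite H.
by rewrite H => /eqP ->.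
Qed.

Lemma dist_out (R : realFieldType) (r : R) x0 y0 t X Y :
  (X < x0 \/ Y < y0)%N -> ca_dist r x0 y0 t (X, Y) = 0.
Proof.
move=> H; rewrite /ca_dist big_pred0 // => bs.
apply/negbTE/eqP => E.
have := foldl_inv (x0, y0) bs; rewrite E /=; lia.
Qed.

Lemma path_prob_ge0 (R : realFieldType) (r : R) s bs : 0 <= r -> 0 <= ca_path_prob r s bs.
Proof.
move=> r0; elim: bs s => [|c bs IH] s /=; first exact: ler01.
apply: mulr_ge0 => //; rewrite /ca_trans; case: c.
  by apply: divr_ge0; [apply: mulr_ge0 | apply: addr_ge0; [apply: mulr_ge0|]].
by apply: divr_ge0; [| apply: addr_ge0; [apply: mulr_ge0|]].
Qed.

Lemma dist_ge0 (R : realFieldType) (r : R) x0 y0 t s : 0 <= r -> 0 <= ca_dist r x0 y0 t s.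
Proof. by move=> r0; apply: sumr_ge0 => bs _; apply: path_prob_ge0. Qed.

Lemma trans_ge0 (R : realFieldType) (r : R) s b : 0 <= r -> 0 <= ca_trans r s b.
Proof.
move=> r0; rewrite /ca_trans; case: b.
  by apply: divr_ge0; [apply: mulr_ge0 | apply: addr_ge0; [apply: mulr_ge0|]].
by apply: divr_ge0; [| apply: addr_ge0; [apply: mulr_ge0|]].
Qed.

Lemma dist_0 (R : realFieldType) (r : R) x0 y0 : ca_dist r x0 y0 0 (x0, y0) = 1.
Proof.
rewrite /ca_dist (eq_bigl (pred1 [tuple])) ?big_pred1_eq //.
by move=> bs; rewrite (tuple0 bs) /= eqxx.
Qed.

Lemma step_true_eq w X Y : (0 < X)%N -> (ca_step w true == (X, Y)) = (w == (X.-1, Y)).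
Proof.
case: w => w1 w2 hX; apply/eqP/eqP => [[<- <-] // | [-> ->]].
by rewrite /ca_step /= prednK.
Qed.

Lemma step_false_eq w X Y : (0 < Y)%N -> (ca_step w false == (X, Y)) = (w == (X, Y.-1)).
Proof.
case: w => w1 w2 hY; apply/eqP/eqP => [[<- <-] // | [-> ->]].
by rewrite /ca_step /= prednK.
Qed.

Lemma pochS (R : realFieldType) (c : R) k : poch c k.+1 = poch c k * (c + k%:R).
Proof. by rewrite /poch big_ord_recr. Qed.

Lemma poch_gt0 (R : realFieldType) (c : R) k : 0 < c -> 0 < poch c k.
Proof.
move=> hc; apply: prodr_gt0 => i _; have := ler0n R i; lra.
Qed.

Lemma alg (R : realFieldType) (r D P A B : R) : 1 <= r -> 0 < D -> 0 <= P -> 0 <= A -> 0 <= B ->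
  (P + P*(B+1)/(A+1)) / (D + (A+B+1)) <=
  r*P/(D + r*A + (B+1)) + P*(B+1)/(A+1) / (D + r*(A+1) + B).
Proof.
move=> r1 D0 P0 A0 B0; rewrite -subr_ge0.
have n1 : D + (A+B+1) != 0 by apply/lt0r_neq0; lra.
have n2 : D + r*A + (B+1) != 0 by apply/lt0r_neq0; nra.
have n3 : D + r*(A+1) + B != 0 by apply/lt0r_neq0; nra.
have n4 : A + 1 != 0 by apply/lt0r_neq0; lra.
have -> : r*P/(D + r*A + (B+1)) + P*(B+1)/(A+1) / (D + r*(A+1) + B)
  - (P + P*(B+1)/(A+1)) / (D + (A+B+1)) =
  P*(r-1)*(D*(D+r*(A+1)+B) + (B+1)*(r-1)) /
   ((D+(A+B+1))*(D+r*A+(B+1))*(D+r*(A+1)+B)).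
  by field; rewrite n1 n2 n3 n4.
apply: divr_ge0.
  apply: mulr_ge0; first by apply: mulr_ge0 => //; lra.
  apply: addr_ge0; last by apply: mulr_ge0; lra.
  by apply: mulr_ge0; [lra | nra].
by apply: mulr_ge0; [apply: mulr_ge0|]; nra.
Qed.

Definition Kb (R : realFieldType) (r : R) (x0 y0 a b : nat) : R :=
  poch (x0%:R) a * poch (y0%:R) b / poch (r * x0%:R + y0%:R) (a + b)
    * ('C(a + b, a))%:R.

Lemma core (R : realFieldType) (r : R) x0 y0 a b : 1 <= r -> (0 < x0)%N -> (0 < y0)%N ->
  Kb r x0 y0 a.+1 b.+1 <= Kb r x0 y0 a b.+1 * ca_trans r ((x0 + a)%N, (y0 + b.+1)%N) true
     + Kb r x0 y0 a.+1 b * ca_trans r ((x0 + a.+1)%N, (y0 + b)%N) false.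
Proof.
move=> r1 hx hy; rewrite /Kb /ca_trans /=.
have e1 : (a.+1 + b.+1 = (a + b + 1).+1)%N by lia.
have e2 : (a + b.+1 = a + b + 1)%N by lia.
have e3 : (a.+1 + b = a + b + 1)%N by lia.
rewrite e1 e2 e3 !pochS binS.
have hQ : ('C(a + b + 1, a.+1))%:R = ('C(a + b + 1, a))%:R * (b%:R + 1) / (a%:R + 1) :> R.
  have := mul_bin_left (a + b + 1) a.
  have -> : (a + b + 1 - a = b.+1)%N by lia.
  move=> /(congr1 (fun n => n%:R : R)); rewrite !natrM -!natr1 => H.
  have n4 : a%:R + 1 != 0 :> R by apply/lt0r_neq0; have := ler0n R a; lra.
  by apply: (mulIf n4); rewrite mulfVK // mulrC H mulrC.
rewrite !natrD hQ -!natr1 ?add0r.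
set X := x0%:R; set Y := y0%:R; set A := a%:R; set B := b%:R.
set px := poch X a; set py := poch Y b; set pd := poch (r * X + Y) (a + b + 1).
set P := ('C(a + b + 1, a))%:R.
have hX : 0 < X by rewrite ltr0n.
have hY : 0 < Y by rewrite ltr0n.
have hA : 0 <= A by apply: ler0n.
have hB : 0 <= B by apply: ler0n.
have hpx : 0 < px by apply: poch_gt0.
have hpy : 0 < py by apply: poch_gt0.
have hpd : 0 < pd by apply: poch_gt0; nra.
have hP : 0 <= P by apply: ler0n.
have hc : 0 <= px * py * (X + A) * (Y + B) / pd.
  apply: divr_ge0; last lra.
  by apply: mulr_ge0; [apply: mulr_ge0; [apply: mulr_ge0|]|]; nra.
have hD : 0 < r * X + Y by nra.
have key := ler_wpM2l hc (alg r1 hD hP hA hB).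
apply: le_trans (le_trans _ key) _; rewrite le_eqVlt; apply/orP; left; apply/eqP.
  by field; rewrite -/X -/Y -/A -/B; apply/and3P; split; apply/lt0r_neq0; nra.
by field; rewrite -/X -/Y -/A -/B; apply/and4P; split; apply/lt0r_neq0; nra.
Qed.

Lemma core_a0 (R : realFieldType) (r : R) x0 y0 b : 1 <= r -> (0 < x0)%N -> (0 < y0)%N ->
  Kb r x0 y0 0 b.+1 <= Kb r x0 y0 0 b * ca_trans r (x0, (y0 + b)%N) false.
Proof.
move=> r1 hx hy; rewrite /Kb /ca_trans /= !add0n ?bin0 !pochS natrD ?mulr1.
set X := x0%:R; set Y := y0%:R; set B := b%:R.
set p := poch X 0; set q := poch Y b; set d := poch (r * X + Y) b.
have hX : 0 < X by rewrite ltr0n.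
have hY : 0 < Y by rewrite ltr0n.
have hB : 0 <= B by apply: ler0n.
have hd : 0 < d by apply: poch_gt0; nra.
rewrite le_eqVlt; apply/orP; left; apply/eqP.
by field; apply/andP; split; apply/lt0r_neq0; nra.
Qed.

Lemma core_b0 (R : realFieldType) (r : R) x0 y0 a : 1 <= r -> (0 < x0)%N -> (0 < y0)%N ->
  Kb r x0 y0 a.+1 0 <= Kb r x0 y0 a 0 * ca_trans r ((x0 + a)%N, y0) true.
Proof.
move=> r1 hx hy; rewrite /Kb /ca_trans /= !addn0 ?bin0 !pochS natrD ?mulr1.
set X := x0%:R; set Y := y0%:R; set A := a%:R.
set p := poch X a; set q := poch Y 0; set d := poch (r * X + Y) a.
have hX : 0 < X by rewrite ltr0n.
have hY : 0 < Y by rewrite ltr0n.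
have hA : 0 <= A by apply: ler0n.
have hd : 0 < d by apply: poch_gt0; nra.
have hp : 0 < p by apply: poch_gt0.
have hq : 0 < q by apply: poch_gt0.
rewrite !binn mulr1 mulr1 -subr_ge0.
have -> : p * q / d * (r * (X + A) / (r * (X + A) + Y)) - p * (X + A) * q / (d * (r * X + Y + A))
  = p * q * (X + A) * (r - 1) * (r * X + Y) / (d * (r * X + Y + A) * (r * (X + A) + Y)).
  by field; apply/and3P; split; apply/lt0r_neq0; nra.
apply: divr_ge0; last by apply: mulr_ge0; [apply: mulr_ge0|]; nra.
by apply: mulr_ge0; [apply: mulr_ge0; [apply: mulr_ge0; [apply: mulr_ge0|]|]|]; nra.
Qed.

Lemma main_ind (R : realFieldType) (r : R) x0 y0 n : 1 <= r -> (0 < x0)%N -> (0 < y0)%N ->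
  forall a b, (a + b = n)%N -> Kb r x0 y0 a b <= ca_dist r x0 y0 n ((x0 + a)%N, (y0 + b)%N).
Proof.
move=> r1 hx hy; have r0 : 0 <= r by lra.
elim: n => [|n IH] a b hab.
  have [-> ->] : a = 0%N /\ b = 0%N by lia.
  rewrite !addn0 dist_0 /Kb /poch !big_ord0 bin0 mul1r divr1 mulr1; exact: lexx.
rewrite dist_S big_bool /=.
rewrite (@dist_pick R r x0 y0 n _ ((x0 + a).-1, (y0 + b)%N) true); last by move=> w; apply: step_true_eq; lia.
rewrite (@dist_pick R r x0 y0 n _ ((x0 + a)%N, (y0 + b).-1) false); last by move=> w; apply: step_false_eq; lia.
case: a hab => [|a] hab; case: b hab => [|b] hab //.
- rewrite dist_out; last by left; lia.
  rewrite mul0r add0r addn0 (_ : (y0 + b.+1).-1 = (y0 + b)%N); last by lia.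
  apply: le_trans (core_a0 b r1 hx hy) _.
  apply: ler_wpM2r; first exact: trans_ge0.
  by have := IH 0%N b ltac:(lia); rewrite addn0.
- rewrite (@dist_out R r x0 y0 n (x0 + a.+1)%N (y0 + 0).-1); last by right; lia.
  rewrite mul0r addr0 addn0 (_ : (x0 + a.+1).-1 = (x0 + a)%N); last by lia.
  apply: le_trans (core_b0 a r1 hx hy) _.
  apply: ler_wpM2r; first exact: trans_ge0.
  by have := IH a 0%N ltac:(lia); rewrite addn0.
- rewrite (_ : (x0 + a.+1).-1 = (x0 + a)%N); last by lia.
  rewrite (_ : (y0 + b.+1).-1 = (y0 + b)%N); last by lia.
  apply: le_trans (core a b r1 hx hy) _.
  apply: lerD; apply: ler_wpM2r; try exact: trans_ge0; apply: IH; lia.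
Qed.

Theorem lemma1 (R : realFieldType) (r : R) (x0 y0 k h : nat) :
  1 <= r -> (0 < x0)%N -> (0 < y0)%N ->
  poch (x0%:R) k * poch (y0%:R) h / poch (r * x0%:R + y0%:R) (k + h)
    * ('C(k + h, k))%:R
  <= p_r r x0 y0 (x0 + k) (y0 + h).
Proof.
move=> r1 hx hy; rewrite /p_r (_ : (x0 + k + (y0 + h) - (x0 + y0))%N = (k + h)%N); last by lia.
exact: (main_ind r1 hx hy).
Qed.
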